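(* Let $F\in\mathbb{R}[x_1,\dots,x_n]$ be a form that is indefinite on $\mathbb{T}_n=\{(x_1,\dots,x_n): x_i\ge0,\ \sum_i x_i=1\}$, i.e., there exist $X,Y\in\mathbb{T}_n$ with $F(X)>0$ and $F(Y)<0$. Then the sequence of sets $\{\mathrm{SDS}^{(m)}(F)\}_{m\ge1}$ is negatively terminating, i.e., there exist a positive integer $k$ and a form $G\in\mathrm{SDS}^{(k)}(F)$ with $G(1,1,\dots,1)<0$.
   Context: $W_n$ is the $n\times n$ matrix with $(W_n)_{ij}=1/j$ for $i\le j$ and $0$ for $i>j$. For a permutation $[k_1\cdots k_n]$ of $1,\dots,n$, $P_{[k_1\cdots k_n]}$ is the permutation matrix with $1$ in positions $(i,k_i)$ and $0$ elsewhere, and $B_{[k_1\cdots k_n]}=P_{[k_1\cdots k_n]}W_n$; $PW_n$ denotes the set of these $n!$ matrices. For $m\ge1$, $\mathrm{SDS}^{(m)}(F)$ is the set of forms $F(B_{[\alpha_1]}B_{[\alpha_2]}\cdots B_{[\alpha_m]}X^{\mathrm{Tr}})$, $X=(x_1,\dots,x_n)$, as $B_{[\alpha_1]},\dots,B_{[\alpha_m]}$ range independently over $PW_n$. *)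

(* Defs.v *)
From HB Require Import structures.
From mathcomp Require Import all_boot all_order all_algebra all_fingroup.
From mathcomp Require Import reals.
From mathcomp Require Import mpoly.
Set Implicit Arguments. Unset Strict Implicit. Unset Printing Implicit Defensive.
Import Order.TTheory GRing.Theory Num.Theory.
Local Open Scope ring_scope.

Section SDS.
Variables (R : realType) (n : nat).

Definition Wmx : 'M[R]_n :=
  \matrix_(i < n, j < n) (if (i <= j)%N then (j.+1%:R)^-1 else 0).

(* P_{[k_1..k_n]}: entry (i, k_i) is 1, others 0, where k_i = s i. *)
Definition Pmx (s : 'S_n) : 'M[R]_n :=
  \matrix_(i < n, j < n) (if s i == j then 1 else 0).

Definition Bmx (s : 'S_n) : 'M[R]_n := Pmx s *m Wmx.

Definition Bprod (ss : seq 'S_n) : 'M[R]_n :=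
  foldr (fun s M => Bmx s *m M) 1%:M ss.

Definition sub_form (F : {mpoly R[n]}) (M : 'M[R]_n) : {mpoly R[n]} :=
  F \mPo [tuple \sum_(j < n) M i j *: 'X_j | i < n].

Definition in_SDS (m : nat) (F G : {mpoly R[n]}) : Prop :=
  exists ss : seq 'S_n, size ss = m /\ G = sub_form F (Bprod ss).

Definition in_simplex (x : 'I_n -> R) : Prop :=
  (forall i, 0 <= x i) /\ \sum_(i < n) x i = 1.

End SDS.

(* Main.v *)
Require Import Defs.
From HB Require Import structures.
From mathcomp Require Import all_boot all_order all_algebra all_fingroup.
From mathcomp Require Import reals.
From mathcomp Require Import mpoly.
From mathcomp Require Import ring lra.
Import Order.TTheory GRing.Theory Num.Theory.
Local Open Scope ring_scope.
Set Implicit Arguments. Unset Strict Implicit. Unset Printing Implicit Defensive.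

Section S1.
Variables (R : realType) (n : nat).

Lemma eval_sub_form (F : {mpoly R[n]}) (M : 'M[R]_n) v :
  (sub_form F M).@[v] = F.@[fun i => \sum_j M i j * v j].
Proof.
rewrite /sub_form comp_mpoly_meval; apply: meval_eq => i.
rewrite tnth_mktuple raddf_sum; apply: eq_bigr => j _ /=.
by rewrite (mevalZ v (M i j) 'X_j) mevalXU.
Qed.

Lemma homog_eval (F : {mpoly R[n]}) d (c : R) v : F \is d.-homog ->
  F.@[fun i => c * v i] = c ^+ d * F.@[v].
Proof.
move=> hF; rewrite !mevalE mulr_sumr; apply: eq_big_seq => m hm.
rewrite mulrCA; congr (_ * _).
under eq_bigr do rewrite exprMn.
rewrite big_split /= prodrXr -(dhomog_mf hF hm).
congr (_ ^+ _ * _); exact: (esym (mdegE m)).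
Qed.
End S1.
Section S2.
Variables (R : realType) (n : nat).

Definition lipat (Y : 'I_n -> R) (f : ('I_n -> R) -> R) :=
  exists C, 0 <= C /\ forall (e : R) x, 0 <= e <= 1 ->
    (forall i, `|x i - Y i| <= e) -> `|f x - f Y| <= C * e.

Lemma lip_ext Y f g : (forall x, f x = g x) -> lipat Y f -> lipat Y g.
Proof. by move=> e [C [C0 h]]; exists C; split => // ee x he hx; rewrite -!e; apply: h. Qed.

Lemma lip_cst Y c : lipat Y (fun _ => c).
Proof. by exists 0; split => // e x _ _; rewrite subrr normr0 mul0r. Qed.

Lemma lip_coord Y i : lipat Y (fun x => x i).
Proof. by exists 1; split => // e x _ h; rewrite mul1r. Qed.

Lemma lip_add Y f g : lipat Y f -> lipat Y g -> lipat Y (fun x => f x + g x).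
Proof.
move=> [Cf [Cf0 hf]] [Cg [Cg0 hg]]; exists (Cf + Cg); split; first exact: addr_ge0.
move=> e x he hx; rewrite mulrDl.
rewrite (_ : f x + g x - (f Y + g Y) = (f x - f Y) + (g x - g Y)); last by ring.
by apply: le_trans (ler_normD _ _) _; apply: lerD; [apply: hf|apply: hg].
Qed.

Lemma lip_mul Y f g : lipat Y f -> lipat Y g -> lipat Y (fun x => f x * g x).
Proof.
move=> [Cf [Cf0 hf]] [Cg [Cg0 hg]].
exists ((`|f Y| + Cf) * Cg + `|g Y| * Cf); split.
  by apply: addr_ge0; apply: mulr_ge0 => //; apply: addr_ge0.
move=> e x he hx.
rewrite (_ : f x * g x - f Y * g Y = f x * (g x - g Y) + g Y * (f x - f Y)); last by ring.
apply: le_trans (ler_normD _ _) _; rewrite mulrDl; apply: lerD; rewrite normrM.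
- rewrite -mulrA; apply: ler_pM => //.
  have := ler_normD (f x - f Y) (f Y); rewrite subrK => h1.
  apply: le_trans h1 _; rewrite addrC; apply: lerD => //.
  apply: le_trans (hf _ _ he hx) _.
  case/andP: he => he0 he1; rewrite -{2}(mulr1 Cf); exact: ler_wpM2l.
  exact: hg.
- by rewrite -mulrA; apply: ler_wpM2l => //; apply: hf.
Qed.

Lemma lip_sum Y (I : Type) (s : seq I) (P : pred I) (f : I -> ('I_n -> R) -> R) :
  (forall a, lipat Y (f a)) -> lipat Y (fun x => \sum_(a <- s | P a) f a x).
Proof.
move=> hf; elim: s => [|a s IH].
  by apply: (lip_ext (f:=fun=> 0)) => [x|]; [rewrite big_nil|apply: lip_cst].
case: (boolP (P a)) => Pa.
  by apply: lip_ext (lip_add (hf a) IH) => x; rewrite big_cons Pa.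
by apply: lip_ext IH => x; rewrite big_cons (negbTE Pa).
Qed.

Lemma lip_prod Y (I : Type) (s : seq I) (P : pred I) (f : I -> ('I_n -> R) -> R) :
  (forall a, lipat Y (f a)) -> lipat Y (fun x => \prod_(a <- s | P a) f a x).
Proof.
move=> hf; elim: s => [|a s IH].
  by apply: (lip_ext (f:=fun=> 1)) => [x|]; [rewrite big_nil|apply: lip_cst].
case: (boolP (P a)) => Pa.
  by apply: lip_ext (lip_mul (hf a) IH) => x; rewrite big_cons Pa.
by apply: lip_ext IH => x; rewrite big_cons (negbTE Pa).
Qed.

Lemma lip_exp Y f k : lipat Y f -> lipat Y (fun x => f x ^+ k).
Proof.
move=> hf; elim: k => [|k IH].
  by apply: (lip_ext (f:=fun=> 1)) => [x|]; [rewrite expr0|apply: lip_cst].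
by apply: lip_ext (lip_mul hf IH) => x; rewrite exprS.
Qed.

Lemma lip_meval Y (F : {mpoly R[n]}) : lipat Y (fun x => F.@[x]).
Proof.
apply: (lip_ext (f := fun x => \sum_(m <- msupp F) F@_m * \prod_i x i ^+ m i)).
  by move=> x; rewrite mevalE.
apply: lip_sum => m; apply: lip_mul; first exact: lip_cst.
apply: lip_prod => i; apply: lip_exp; exact: lip_coord.
Qed.

Lemma neg_near (F : {mpoly R[n]}) Y : F.@[Y] < 0 ->
  exists e : R, 0 < e /\ forall x, (forall i, `|x i - Y i| <= e) -> F.@[x] < 0.
Proof.
move=> hY; have [C [C0 hC]] := lip_meval Y F.
pose d := - F.@[Y] / (C + 1).
have C1 : 0 < C + 1 by apply: ltr_wpDl.
have d0 : 0 < d by apply: divr_gt0 => //; rewrite oppr_gt0.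
exists (Num.min 1 d); split; first by rewrite lt_min ltr01 d0.
move=> x hx.
have he : 0 <= Num.min 1 d <= 1 by rewrite ge_min lexx le_min ler01 ltW.
have := hC _ _ he hx.
have hm : C * Num.min 1 d < - F.@[Y].
  apply: (@le_lt_trans _ _ (C * d)); first by apply: ler_wpM2l => //; rewrite ge_min lexx orbT.
  rewrite /d mulrA ltr_pdivrMr // mulrDr mulr1.
  have : 0 < - F.@[Y] by rewrite oppr_gt0.
  have : 0 <= C * - F.@[Y] by apply: mulr_ge0 => //; rewrite oppr_ge0 ltW.
  lra.
move=> h.
have := le_trans (ler_norm _) h.
move: hm; lra.
Qed.
End S2.
Section S.
Variables (R : realType) (n : nat).

Lemma BmxE (s : 'S_n) l j :
  Bmx R s l j = if (s l <= j)%N then (j.+1%:R)^-1 else 0.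
Proof.
rewrite /Bmx mxE (bigD1 (s l)) //= !mxE eqxx mul1r big1 ?addr0 // => r hr.
by rewrite mxE eq_sym (negbTE hr) mul0r.
Qed.

Lemma Bmx_ge0 (s : 'S_n) l j : 0 <= Bmx R s l j.
Proof. by rewrite BmxE; case: ifP => // _; rewrite invr_ge0 ler0n. Qed.

Lemma Bmx_colsum (s : 'S_n) j : \sum_l Bmx R s l j = 1.
Proof.
under eq_bigr do rewrite BmxE.
rewrite (reindex_inj (@perm_inj _ s^-1)) /=.
under eq_bigr do rewrite permKV.
rewrite -big_mkcond /=.
rewrite -(big_ord_widen _ (fun _ => j.+1%:R^-1) (ltn_ord j)) sumr_const card_ord.
have h : (j.+1%:R : R) != 0 by rewrite pnatr_eq0.
by rewrite -(mulr_natr (j.+1%:R^-1)) mulVf.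
Qed.


Lemma maxsplit (x : R) : Num.max x 0 = x + Num.max (- x) 0.
Proof.
rewrite /Num.max; case: (ltP x 0) => h1; case: (ltP (-x) 0) => h2; lra.
Qed.

Lemma posbound1 (s : 'S_n) (j k : 'I_n) : (k <= j)%N ->
  \sum_l Num.max (Bmx R s l j - Bmx R s l k) 0 <= 1 - n%:R^-1.
Proof.
move=> kj.
have n0 : (0 < n)%N by apply: leq_ltn_trans (leq0n _) (ltn_ord j).
pose p0 : 'I_n := Ordinal n0.
pose l0 := (s^-1)%g p0.
have sl0 : s l0 = p0 by rewrite /l0 permKV.
apply: (@le_trans _ _ (\sum_l (if l == l0 then 0 else Bmx R s l j))).
  apply: ler_sum => l _; case: eqP => [->|_].
    rewrite ge_max lexx andbT !BmxE sl0 /=.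
    rewrite subr_le0 lef_pV2 ?posrE ?ltr0Sn // ler_nat ltnS //.
  by rewrite ge_max Bmx_ge0 andbT gerBl Bmx_ge0.
have := Bmx_colsum s j; rewrite (bigD1 l0) //= => h.
rewrite (bigD1 l0) //= eqxx add0r.
rewrite (eq_bigr (fun l => Bmx R s l j)); last by move=> l /negbTE ->.
have -> : \sum_(i < n | i != l0) Bmx R s i j = 1 - Bmx R s l0 j by rewrite -h addrC addrK.
apply: lerB => //; rewrite BmxE sl0 /= lef_pV2 ?posrE ?ltr0Sn ?ltr0n // ler_nat.
exact: ltn_ord.
Qed.

Lemma posbound (s : 'S_n) (j k : 'I_n) :
  \sum_l Num.max (Bmx R s l j - Bmx R s l k) 0 <= 1 - n%:R^-1.
Proof.
case: (leqP k j) => h; first exact: posbound1.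
under eq_bigr do rewrite maxsplit opprB.
rewrite big_split /= sumrB !Bmx_colsum subrr add0r.
apply: posbound1; exact: ltnW.
Qed.

Definition sp (M : 'M[R]_n) (e : R) := forall i j k, M i j - M i k <= e.

Lemma contract (M : 'M[R]_n) e s : sp M e -> sp (M *m Bmx R s) ((1 - n%:R^-1) * e).
Proof.
move=> hM i j k.
have e0 : 0 <= e by have := hM i j j; rewrite subrr.
pose d l := Bmx R s l j - Bmx R s l k.
have sd : \sum_l d l = 0 by rewrite sumrB !Bmx_colsum subrr.
pose lo := M i [arg min_(l < i) M i l]%O.
have hlo l : lo <= M i l.
  by rewrite /lo; case: arg_minP => // m _ hm; apply: hm.
have hup l : M i l - lo <= e by apply: hM.
have E : (M *m Bmx R s) i j - (M *m Bmx R s) i k = \sum_l (M i l - lo) * d l.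
  rewrite (eq_bigr (fun l => M i l * d l - lo * d l)); last by move=> l _; rewrite mulrBl.
  rewrite sumrB -mulr_sumr sd mulr0 subr0 !mxE -sumrB.
  by apply: eq_bigr => l _; rewrite mulrBr.
rewrite E.
apply: (@le_trans _ _ (\sum_l e * Num.max (d l) 0)).
  apply: ler_sum => l _; have := hlo l; have := hup l.
  rewrite /Num.max; case: (ltP (d l) 0) => h1 h2 h3; nra.
rewrite -mulr_sumr mulrC; apply: ler_wpM2r => //; exact: posbound.
Qed.

Lemma Bprod_rcons (ss : seq 'S_n) (s : 'S_n) : Bprod R (rcons ss s) = Bprod R ss *m Bmx R s.
Proof.
elim: ss => [|a ss IH] /=; first by rewrite /Bprod /= mulmx1 mul1mx.
by rewrite /Bprod /= -/(Bprod R _) IH mulmxA.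
Qed.

Lemma sp_Bprod (ss : seq 'S_n) : sp (Bprod R ss) ((1 - n%:R^-1) ^+ size ss).
Proof.
elim/last_ind: ss => [|ss s IH].
  move=> i j k; rewrite /Bprod /= expr0 !mxE.
  case: eqP => _; case: eqP => _ /=; lra.
rewrite Bprod_rcons size_rcons exprS; exact: contract.
Qed.

End S.

Lemma cover (R : realType) N (y : 'I_N.+1 -> R) : in_simplex y ->
  exists s : 'S_N.+1, exists y' : 'I_N.+1 -> R, in_simplex y' /\
    forall i, y i = \sum_j Bmx R s i j * y' j.
Proof.
move=> [y0 y1].
pose leT := fun a b : 'I_N.+1 => y b <= y a.
pose r := sort leT (enum 'I_N.+1).
have sr : size r = N.+1 by rewrite size_sort size_enum_ord.
have ur : uniq r by rewrite sort_uniq enum_uniq.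
have sorted_r : sorted leT r by apply: sort_sorted => a b; exact: le_total.
pose t0 := fun p : 'I_N.+1 => nth ord0 r p.
have t0inj : injective t0.
  by move=> p q /eqP; rewrite /t0 nth_uniq ?sr // => /eqP; exact: val_inj.
pose t := perm t0inj.
have tE p : t p = t0 p by rewrite permE.
have tmono (p q : 'I_N.+1) : (p <= q)%N -> y (t q) <= y (t p).
  move=> pq; rewrite !tE; apply: (sorted_leq_nth _ _ ord0 sorted_r) => //; rewrite ?inE ?sr //.
    by move=> a b c; rewrite /leT => h1 h2; exact: le_trans h2 h1.
  by move=> a; rewrite /leT.
exists (t^-1)%g.
pose V k := if (k < N.+1)%N then y (t (inord k)) else 0.
pose y' (j : 'I_N.+1) := j.+1%:R * (V j - V j.+1).
have Vmono k : V k.+1 <= V k.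
  rewrite /V; case: (ltnP k.+1 N.+1) => h1.
    rewrite (ltnW h1); apply: tmono; rewrite !inordK //; exact: ltnW.
  by case: ifP => // _; apply: y0.
have rep i : y i = \sum_j Bmx R (t^-1) i j * y' j.
  under eq_bigr do rewrite BmxE.
  rewrite (eq_bigr (fun j : 'I_N.+1 => if ((t^-1)%g i <= j)%N then V j - V j.+1 else 0)); last first.
    move=> j _; case: ifP; rewrite ?mul0r // /y' mulrA mulVf ?mul1r //.
    by rewrite pnatr_eq0.
  rewrite -big_mkcond /=.
  rewrite (eq_bigl (fun j : 'I_N.+1 => xpredT (j : nat) && ((t^-1)%g i <= j)%N)) // -(big_geq_mkord _ _ xpredT (fun j => V j - V j.+1)).
  rewrite (eq_bigr (fun k => (- V k.+1) - (- V k))); last by move=> k _; rewrite opprK addrC.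
  rewrite telescope_sumr; last exact: ltnW.
  rewrite /V ltnn ltn_ord inord_val permKV; lra.
exists y'; split; last exact: rep.
split.
  move=> j; rewrite /y'; apply: mulr_ge0; first exact: ler0n.
  by rewrite subr_ge0.
rewrite -y1; under [RHS]eq_bigr do rewrite rep.
rewrite exchange_big; apply: eq_bigr => j _.
by rewrite -mulr_suml Bmx_colsum mul1r.
Qed.


Lemma chain (R : realType) N (Y : 'I_N.+1 -> R) (m : nat) : in_simplex Y ->
  exists ss : seq 'S_N.+1, size ss = m /\ exists y : 'I_N.+1 -> R, in_simplex y /\
    forall i, Y i = \sum_j Bprod R ss i j * y j.
Proof.
move=> hY; elim: m => [|m [ss [hs [y [hy rep]]]]].
  exists [::]; split => //; exists Y; split => // i.
  rewrite /Bprod /= (bigD1 i) //= big1 ?addr0; first by rewrite mxE eqxx mul1r.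
  by move=> j hj; rewrite mxE eq_sym (negbTE hj) mul0r.
have [s [y' [hy' rep']]] := cover hy.
exists (rcons ss s); split; first by rewrite size_rcons hs.
exists y'; split => // i.
rewrite rep Bprod_rcons.
under eq_bigr do rewrite rep' mulr_sumr.
rewrite exchange_big; apply: eq_bigr => l _.
by rewrite mxE mulr_suml; apply: eq_bigr => j _; rewrite mulrA.
Qed.

Lemma qpow (R : realType) N m :
  (1 - (N.+1%:R : R)^-1) ^+ m * (N%:R + m%:R) <= N%:R.
Proof.
set q := 1 - _.
have c0 : (N.+1%:R : R) != 0 by rewrite pnatr_eq0.
have qc : q * N.+1%:R = N%:R.
  by rewrite /q mulrBl mul1r mulVf // mulrS; lra.
have q0 : 0 <= q.
  by rewrite /q subr_ge0 invr_le1 ?unitfE ?ler1n ?ltr0n.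
have q1 : q <= 1 by rewrite /q gerBl invr_ge0 ler0n.
have hN : (N.+1%:R : R) = N%:R + 1 by rewrite mulrS addrC.
elim: m => [|m IH]; first by rewrite expr0 mul1r addr0.
have a0 : 0 <= q ^+ m by apply: exprn_ge0.
have a1 : q ^+ m <= 1 by apply: exprn_ile1.
rewrite exprS mulrS.
have h1 : q * (q ^+ m * (N%:R + m%:R)) <= q * N%:R by apply: ler_wpM2l.
have h2 : q * q ^+ m <= q * 1 by apply: ler_wpM2l.
move: qc; rewrite hN => qc.
nra.
Qed.

Theorem theorem5p1 (R : realType) (n d : nat) (F : {mpoly R[n]})
  (hF : F \is d.-homog) (X Y : 'I_n -> R)
  (hX : in_simplex X) (hY : in_simplex Y)
  (hFX : 0 < F.@[X]) (hFY : F.@[Y] < 0) :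
  exists k : nat, (0 < k)%N /\
    exists G : {mpoly R[n]}, in_SDS k F G /\ G.@[fun _ => 1] < 0.
Proof.
case: n F hF X Y hX hY hFX hFY => [|N] F hF X Y hX hY hFX hFY.
  by case: hX => _; rewrite big_ord0 => /eqP; rewrite eq_sym oner_eq0.
pose c : R := N.+1%:R.
have c0 : 0 < c by rewrite ltr0n.
pose Z := fun i => c * Y i.
have hZ : F.@[Z] < 0.
  rewrite /Z (homog_eval _ _ hF) //; by rewrite pmulr_rlt0 // exprn_gt0.
have [eps [eps0 hnear]] := neg_near hZ.
pose e := eps / (2 * c).
have e0 : 0 < e by apply: divr_gt0 => //; apply: mulr_gt0 => //; rewrite ltr0n.
pose q : R := 1 - c^-1.
pose m := (Num.Def.archi_bound (N%:R / e)).+1.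
have hmN : N%:R < m%:R * e.
  have h := @archi_boundP _ (N%:R / e) (divr_ge0 (ler0n _ _) (ltW e0)).
  rewrite -ltr_pdivrMr //; apply: lt_le_trans h _.
  by rewrite ler_nat.
have hqm : q ^+ m <= e.
  have := qpow R N m; rewrite -/c -/q => h.
  have a0 : 0 <= q ^+ m.
    apply: exprn_ge0; rewrite /q subr_ge0 invr_le1 ?unitfE ?ler1n ?ltr0n //.
    by rewrite pnatr_eq0.
  have Nm : 0 <= (N%:R : R) by apply: ler0n.
  have mm : 0 <= (m%:R : R) by apply: ler0n.
  nra.
have [ss [hss [y [[y0 y1] rep]]]] := chain m hY.
exists m; split => //.
exists (sub_form F (Bprod R ss)); split; first by exists ss.
rewrite eval_sub_form; apply: hnear => i.
have hsp := @sp_Bprod R _ ss; rewrite hss -/c -/q in hsp.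
have E : \sum_j Bprod R ss i j * 1 - Z i
    = \sum_j (Bprod R ss i j - Bprod R ss i i) * (1 - c * y j).
  have S0 : \sum_(j < N.+1) (1 - c * y j) = 0.
    by rewrite sumrB sumr_const card_ord -mulr_sumr y1 mulr1 subrr.
  rewrite [RHS](eq_bigr (fun j => Bprod R ss i j * (1 - c * y j) - Bprod R ss i i * (1 - c * y j))); last by move=> j _; rewrite mulrBl.
  rewrite sumrB -mulr_sumr S0 mulr0 subr0 /Z rep mulr_sumr -sumrB.
  by apply: eq_bigr => j _; rewrite mulrBr; congr (_ - _); rewrite mulrCA.
rewrite E.
apply: le_trans (ler_norm_sum _ _ _) _.
apply: (@le_trans _ _ (\sum_(j < N.+1) e * (1 + c * y j))).
  apply: ler_sum => j _; rewrite normrM.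
  have h1 : `|Bprod R ss i j - Bprod R ss i i| <= e.
    rewrite ler_norml; have := hsp i j i; have := hsp i i j; lra.
  have h2 : `|1 - c * y j| <= 1 + c * y j.
    have : 0 <= c * y j by apply: mulr_ge0; [exact: ltW|exact: y0].
    rewrite ler_norml; lra.
  apply: ler_pM => //; exact: normr_ge0.
rewrite -mulr_sumr big_split /= sumr_const card_ord -mulr_sumr y1 mulr1 -/c.
have cn0 : c != 0 by rewrite lt0r_neq0.
rewrite le_eqVlt; apply/orP; left; apply/eqP.
rewrite /e; field.
by rewrite -mulrS pnatr_eq0.
Qed.
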